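(* Run the mechanism BFM-VM described in the context with arbitrary $B>0$, $\alpha>1$, $\ell\in\{1,2\}$, with all sellers behaving truthfully. Then $$\sum_{i=1}^{\ell}\sum_{t=1}^{M}v(S_{i,t})\ \le\ \frac{4\alpha-2}{\alpha-1}\,v(S^* ).$$
   Context: Setting. $\mathcal{N}$ is a finite set of $n$ sellers. The valuation $v:2^{\mathcal{N}}\to\mathbb{R}_{\ge 0}$ satisfies $v(\emptyset)=0$ and is submodular (for $X\subseteq Y\subseteq\mathcal{N}$ and $u\notin Y$, $v(u\mid Y)\le v(u\mid X)$), not necessarily monotone, where $v(S\mid T)=v(S\cup T)-v(T)$, $v(u\mid T)=v(\{u\}\mid T)$, $v(u)=v(\{u\})$. Each seller $u$ has a private cost $c(u)\ge 0$. $B>0$ is the budget, $[\ell]=\{1,\dots,\ell\}$. Sellers behave truthfully: a seller $u$ offered price $q$ accepts iff $c(u)\le q$. Mechanism BFM-VM (inputs $B$, $\alpha>1$, $\ell\in\{1,2\}$): 1. Offer every seller the price $B$; let $R$ be the set of sellers who accept, and set $p(u)=B$ for $u\in R$. 2. Set $t=1$, $\rho_1=\max_{u\in R}v(u)$, $S_{1,1}=\{u_0\}$ for some $u_0\in\arg\max_{u\in R}v(u)$, and (if $\ell=2$) $S_{2,1}=\emptyset$. 3. Repeat rounds: set $t\leftarrow t+1$, $\rho_t=\alpha\rho_{t-1}$, $S_{i,t}=\emptyset$ for $i\in[\ell]$. Process the sellers $u\in R\setminus\bigcup_{i=1}^{\ell}S_{i,t-1}$ one at a time in a fixed order. For each such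 $u$: pick $j\in\arg\max_{i\in[\ell]}v(u\mid S_{i,t})$ (current contents); update $p(u)\leftarrow\min\{p(u),\ v(u\mid S_{j,t})/(\rho_t/B)\}$ and offer $p(u)$ to $u$. If $u$ accepts: if $v(S_{j,t}\cup\{u\})>\rho_t$, end the round immediately; otherwise add $u$ to $S_{j,t}$. If $u$ rejects, remove $u$ from $R$. After the round, stop if $R\setminus\bigcup_{i=1}^{\ell}(S_{i,t-1}\cup S_{i,t})=\emptyset$; otherwise start another round. 4. Let $M$ be the final value of $t$. Output $S^*\in\arg\max_{A\in\{S_{i,t}: i\in[\ell],\ t\in\{M-1,M\}\}}v(A)$, paying each $u\in S^*$ its current price $p(u)$. Notation: $S_{i,t}$ denotes the contents of that candidate set at the end of round $t$. *)

(* Defs.v *)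
From HB Require Import structures.
From mathcomp Require Import all_boot all_order all_algebra.
Set Implicit Arguments. Unset Strict Implicit. Unset Printing Implicit Defensive.
Import Order.TTheory GRing.Theory Num.Theory.
Local Open Scope ring_scope.

Section Defs.
Variables (T : finType) (F : realFieldType).

Definition marg (v : {set T} -> F) (u : T) (S : {set T}) : F := v (u |: S) - v S.

Definition submodular (v : {set T} -> F) : Prop :=
  forall (X Y : {set T}) (u : T), X \subset Y -> u \notin Y -> marg v u Y <= marg v u X.

Definition upd (p : T -> F) (u : T) (q : F) : T -> F :=
  fun w => if w == u then q else p w.

Definition updS (S : nat -> {set T}) (j : nat) (A : {set T}) : nat -> {set T} :=
  fun i => if i == j then A else S i.

Definition newprice (p : T -> F) (u : T) (m rho B : F) : F :=
  Num.min (p u) (m / (rho / B)).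

(* One round of step 3 of BFM-VM with threshold rho.
   round_run ell v c B rho us Rs p S Rs' p' S' :
   processing the list us of sellers, starting from the set R = Rs, the prices p
   and the current contents S of the candidate sets S_{0..ell-1} of the round,
   the round may end with R = Rs', prices p', candidate sets S'.
   The choice of j (argmax, any tie-breaking) is nondeterministic. Sellers are
   truthful: u accepts the offer q iff c u <= q. *)
Inductive round_run (ell : nat) (v : {set T} -> F) (c : T -> F) (B rho : F) :
  seq T -> {set T} -> (T -> F) -> (nat -> {set T}) ->
  {set T} -> (T -> F) -> (nat -> {set T}) -> Prop :=
| RR_nil Rs p S : round_run ell v c B rho [::] Rs p S Rs p S
| RR_reject u us Rs p S j Rs' p' S' :
    (j < ell)%N ->
    (forall i, (i < ell)%N -> marg v u (S i) <= marg v u (S j)) ->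
    ~~ (c u <= newprice p u (marg v u (S j)) rho B) ->
    round_run ell v c B rho us (Rs :\ u) (upd p u (newprice p u (marg v u (S j)) rho B)) S
      Rs' p' S' ->
    round_run ell v c B rho (u :: us) Rs p S Rs' p' S'
| RR_stop u us Rs p S j :
    (j < ell)%N ->
    (forall i, (i < ell)%N -> marg v u (S i) <= marg v u (S j)) ->
    c u <= newprice p u (marg v u (S j)) rho B ->
    rho < v (u |: S j) ->
    round_run ell v c B rho (u :: us) Rs p S
      Rs (upd p u (newprice p u (marg v u (S j)) rho B)) S
| RR_add u us Rs p S j Rs' p' S' :
    (j < ell)%N ->
    (forall i, (i < ell)%N -> marg v u (S i) <= marg v u (S j)) ->
    c u <= newprice p u (marg v u (S j)) rho B ->
    v (u |: S j) <= rho ->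
    round_run ell v c B rho us Rs (upd p u (newprice p u (marg v u (S j)) rho B))
      (updS S j (u |: S j)) Rs' p' S' ->
    round_run ell v c B rho (u :: us) Rs p S Rs' p' S'.

(* A complete (terminating) run of BFM-VM with inputs B, alpha, ell, sellers
   processed in the fixed order ord.  Indices: candidate set i in [0, ell)
   (paper's i+1), rounds t = 1..M.  S i t is S_{i+1,t} at the end of round t,
   Rs t and p t are R and the prices at the end of round t,
   rho_t = rho_1 * alpha^(t-1) with rho_1 = v({u0}).  Sstar is the output. *)
Definition BFM_VM_run (ord : seq T) (v : {set T} -> F) (c : T -> F) (B alpha : F)
  (ell : nat) (M : nat) (S : nat -> nat -> {set T}) (Sstar : {set T}) : Prop :=
  exists (Rs : nat -> {set T}) (p : nat -> T -> F) (u0 : T),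
  (Rs 1%N = [set u | c u <= B] /\ p 1%N = (fun _ => B)) /\
      (u0 \in Rs 1%N /\ (forall u, u \in Rs 1%N -> v [set u] <= v [set u0])) /\
      (S 0%N 1%N = [set u0] /\ (forall i, (0 < i < ell)%N -> S i 1%N = set0)) /\
      ((2 <= M)%N /\
      (forall t, (2 <= t <= M)%N ->
         round_run ell v c B (v [set u0] * alpha ^+ t.-1)
           [seq u <- ord | (u \in Rs t.-1) && (u \notin \bigcup_(i < ell) S i t.-1)]
           (Rs t.-1) (p t.-1) (fun _ => set0) (Rs t) (p t) (fun i => S i t))) /\
      ((forall t, (2 <= t < M)%N ->
         Rs t :\: \bigcup_(i < ell) (S i t.-1 :|: S i t) != set0) /\
      Rs M :\: \bigcup_(i < ell) (S i M.-1 :|: S i M) = set0) /\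
      ((exists2 i, (i < ell)%N & (Sstar = S i M.-1 \/ Sstar = S i M)) /\
      (forall i, (i < ell)%N -> v (S i M.-1) <= v Sstar /\ v (S i M) <= v Sstar)).

End Defs.

(* Main.v *)
Require Import Defs.
From HB Require Import structures.
From mathcomp Require Import all_boot all_order all_algebra.
From mathcomp Require Import ring lra zify.
Import Order.TTheory GRing.Theory Num.Theory.
Local Open Scope ring_scope.


Lemma round_props (T : finType) (F : realFieldType) ell (v : {set T} -> F) c B rho
  us Rs p S Rs' p' S' :
  round_run ell v c B rho us Rs p S Rs' p' S' ->
  (forall i, v (S i) <= rho) ->
  [/\ Rs' \subset Rs,
      (forall i, v (S' i) <= rho),
      (forall i, S i \subset S' i) &
      ((exists u j, [/\ u \in us, (j < ell)%N & rho < v (u |: S' j)]) \/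
       (forall u, u \in us -> u \notin Rs' \/ exists2 i, (i < ell)%N & u \in S' i))].
Proof.
elim=> {us Rs p S Rs' p' S'}.
- move=> Rs p S HS; split=> //.
  by right=> u; rewrite in_nil.
- move=> u us Rs p S j Rs' p' S' hj _ _ _ IH HS.
  have [sR HS' sS H] := IH HS.
  split=> //.
  + by apply: subset_trans sR (subsetDl _ _).
  + case: H => [[w [k [wi kl lt]]]|H].
      by left; exists w, k; rewrite inE wi orbT.
    right=> w; rewrite inE => /orP[/eqP->|wi]; last exact: H.
    left; apply/negP => uR; have := subsetP sR _ uR; by rewrite !inE eqxx.
- move=> u us Rs p S j hj _ _ hlt HS; split=> //.
  by left; exists u, j; rewrite inE eqxx.
- move=> u us Rs p S j Rs' p' S' hj _ _ hle _ IH HS.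
  have HS2 : forall i, v (updS S j (u |: S j) i) <= rho.
    by move=> i; rewrite /updS; case: eqP.
  have [sR HS' sS H] := IH HS2.
  split=> //.
  + move=> i; apply: subset_trans (sS i); rewrite /updS; case: eqP => // ->.
    exact: subsetUr.
  + case: H => [[w [k [wi kl lt]]]|H].
      by left; exists w, k; rewrite inE wi orbT.
    right=> w; rewrite inE => /orP[/eqP->|wi]; last exact: H.
    right; exists j => //; apply: (subsetP (sS j)).
    by rewrite /updS eqxx !inE eqxx.
Qed.
Arguments round_props {T F ell v c B rho us Rs p S Rs' p' S'}.

Lemma geom (F : realFieldType) (r a : F) n :
  (a - 1) * \sum_(2 <= t < n.+2) r * a ^+ t.-1 = r * a ^+ n.+1 - r * a.
Proof.
elim: n => [|n IH]; first by rewrite big_geq // mulr0 expr1 subrr.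
rewrite big_nat_recr //= mulrDr IH. rewrite !exprS; ring.
Qed.
Lemma fin (F : realFieldType) (r a G V X : F) : 0 <= r -> 1 < a -> 0 <= V ->
  (a-1)*G = X - r*a -> X - r < V -> r + 2 * G + 4 * V <= (4 * a - 2) / (a - 1) * V.
Proof.
move=> r0 a1 V0 HG HV.
have ->: (4 * a - 2) / (a - 1) * V = 4 * V + (2 * V) / (a - 1).
  by field; rewrite subr_eq0; apply/eqP => E; move: a1; rewrite E ltxx.
suff: r + 2 * G <= (2 * V) / (a - 1) by lra.
rewrite ler_pdivlMr ?subr_gt0 //. nra.
Qed.

Theorem lemma5p3 (T : finType) (F : realFieldType) (v : {set T} -> F) (c : T -> F)
  (B alpha : F) (ell : nat) (ord : seq T) (M : nat)
  (S : nat -> nat -> {set T}) (Sstar : {set T}) :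
  v set0 = 0 ->
  (forall A, 0 <= v A) ->
  submodular v ->
  (forall u, 0 <= c u) ->
  0 < B -> 1 < alpha -> (ell == 1)%N || (ell == 2)%N ->
  uniq ord -> (forall u, u \in ord) ->
  BFM_VM_run ord v c B alpha ell M S Sstar ->
  \sum_(i < ell) \sum_(1 <= t < M.+1) v (S i t)
    <= (4 * alpha - 2) / (alpha - 1) * v Sstar.
Proof.
move=> v0 vge0 sub cge0 B0 a1 hell uniqo allo
  [Rs [p [u0 [[HR1 Hp1] [[Hu0 Hmax] [[HS01 HSi1] [[HM Hround] [[Hnz Hfin] [_ Hstar]]]]]]]]].
set r := v [set u0]. set V := v Sstar.
have r0 : 0 <= r by apply: vge0.
have rho0 : forall t, 0 <= r * alpha ^+ t.
  by move=> t; apply: mulr_ge0 => //; apply: exprn_ge0; apply: ltW; apply: lt_trans a1.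
have Hini : forall rho : F, 0 <= rho -> forall i : nat, v ((fun=> set0 : {set T}) i) <= rho.
  by move=> rho h i; rewrite v0.
have HR t (ht : (2 <= t <= M)%N) := round_props (Hround t ht) (Hini _ (rho0 _)).
have HRs1 : forall t, (1 <= t <= M)%N -> Rs t \subset Rs 1%N.
  elim=> [|t IH] //; case: t IH => [|t] IH ht; first exact: subxx.
  have [sR _ _ _] := HR t.+2 ht.
  apply: subset_trans sR (IH _); lia.
have V0 : 0 <= V by apply: vge0.
have Hlow : (3 <= M)%N -> r * alpha ^+ M.-2 - r < V.
  move=> M3; have ht : (2 <= M.-1 <= M)%N by lia.
  have [sR _ _ [[u [j [uin jl lt]]]|H]] := HR _ ht.
  - rewrite mem_filter in uin; case/andP: uin => /andP[uR _] _.
    have u1 : u \in Rs 1%N by apply: (subsetP (HRs1 M.-2 _)) => //; lia.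
    have vu := Hmax u u1.
    have hm : v (u |: S j M.-1) - v (S j M.-1) <= v [set u].
      case: (boolP (u \in S j M.-1)) => uS.
        by rewrite (setUidPr _) ?sub1set // subrr vge0.
      have := sub set0 (S j M.-1) u (sub0set _) uS.
      by rewrite /marg setU0 v0 subr0.
    have [hs _] := Hstar j jl.
    move: lt vu hm hs; rewrite /r /V; lra.
  - have ht2 : (2 <= M.-1 < M)%N by lia.
    case/set0Pn: (Hnz _ ht2) => x; rewrite inE => /andP[xnot xR].
    have xR' : x \in Rs M.-2 by apply: (subsetP sR).
    case: (boolP (x \in \bigcup_(i < ell) S i M.-2)) => xb.
      case/bigcupP: xb => i _ xi; case/negP: xnot; apply/bigcupP; exists i => //.
      by rewrite inE xi.
    have xin : x \in [seq u0 <- ord | u0 \in Rs M.-1.-1 & u0 \notin \bigcup_(i < ell) S i M.-1.-1].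
      by rewrite mem_filter xR' xb allo.
    case: (H x xin) => [xn|[i il xi]]; first by rewrite xR in xn.
    case/negP: xnot; apply/bigcupP; exists (Ordinal il) => //.
    by rewrite inE xi orbT.
have a0 : 0 < alpha - 1 by rewrite subr_gt0.
have E4 : (4 * alpha - 2) / (alpha - 1) * V = 4 * V + (2 * V) / (alpha - 1).
  by field; rewrite subr_eq0; apply/eqP => E; move: a1; rewrite E ltxx.
have hV2 : 0 <= (2 * V) / (alpha - 1).
  by apply: divr_ge0; [apply: mulr_ge0 | apply: ltW].
have [EM|M3] : M = 2%N \/ (3 <= M)%N by lia.
  subst M.
  have Hi : forall i : 'I_ell, \sum_(1 <= t < 3) v (S i t) <= 2 * V.
    move=> i; rewrite big_nat_recr // big_nat1.
    have [h1 h2] := Hstar i (ltn_ord i); simpl in h1, h2; rewrite /V /=; lra.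
  apply: le_trans (ler_sum _ (fun i _ => Hi i)) _.
  rewrite sumr_const card_ord E4.
  by case/orP: hell => /eqP ->; rewrite ?mulr1n ?mulr2n; lra.
have [m Em] : exists m, M = m.+3 by exists (M - 3)%N; lia.
subst M.
have HL := Hlow M3; simpl in HL.
set G := \sum_(2 <= t < m.+2) r * alpha ^+ t.-1.
have HG : (alpha - 1) * G = r * alpha ^+ m.+1 - r * alpha by apply: geom.
have G0 : 0 <= G by apply: sumr_ge0 => t _; apply: rho0.
have Hi : forall i : 'I_ell, \sum_(1 <= t < m.+4) v (S i t) <= v (S i 1%N) + G + 2 * V.
  move=> i; rewrite big_nat_recr // big_nat_recr // big_ltn //.
  have [h1 h2] := Hstar i (ltn_ord i); simpl in h1, h2.
  have hmid : \sum_(2 <= t < m.+2) v (S i t) <= G.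
    apply: ler_sum_nat => t ht.
    have ht' : (2 <= t <= m.+3)%N by clear -ht; lia.
    by have [_ hb _ _] := HR t ht'; apply: hb.
  move: hmid; rewrite /V /=; lra.
apply: le_trans (ler_sum _ (fun i _ => Hi i)) _.
have hf := @fin _ _ _ _ _ _ r0 a1 V0 HG HL.
move: hf; set Q := (4 * alpha - 2) / (alpha - 1) * V => hf.
case/orP: hell => /eqP El; subst ell.
  rewrite big_ord_recr big_ord0 /= add0r HS01 -/r; lra.
rewrite !big_ord_recr big_ord0 /= add0r HS01 HSi1 // v0 -/r; lra.
Qed.
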